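(* Let $\succ=(\succ_s)_{s\in S}$ be a priority profile in which every $\succ_s$ is acyclic, and let $C:S\rightrightarrows I\times I$ be any correspondence. Then there exists a matching that is partially stable for $(\succ,C)$.
   Context: A binary relation $B$ on $X$ is asymmetric if $(x,y)\in B$ implies $(y,x)\notin B$; acyclic if for all $K\ge2$ and $x_0,\dots,x_K\in X$, [$(x_{k-1},x_k)\in B$ and $(x_k,x_{k-1})\notin B$ for all $k$] implies $(x_K,x_0)\notin B$. School choice setup: $I$ finite set of students ($|I|\ge 3$), $S$ finite set of schools; each student $i$ has a total order $P_i$ on $S\cup\{\emptyset\}$ ($sR_is'$ means $sP_is'$ or $s=s'$); each school $s$ has capacity $q_s\in\mathbb{Z}_{++}$ and an asymmetric priority relation $\succ_s$ on $I$. A matching $\mu$ assigns each $i$ to $\mu(i)\in S\cup\{\emptyset\}$ with $|\mu(s)|\le q_s$, $\mu(s)=\{i:\mu(i)=s\}$. $\mu$ is individually rational if $\mu(i)R_i\emptyset$ for all $i$, non-wasteful if $sP_i\mu(i)$ implies $|\mu(s)|=q_s$. $C(s)\subseteq I\times I$ lists pairs $(i,j)$ whose priority at $s$ may be violated. A matching $\mu$ is partially stable for $(\succ,C)$ if it is individually rational, non-wasteful, and for all $i,j\in I$ and $s\in S$: if $\mu(j)=s$, $sP_i\mu(i)$ and $(i,j)\in\succ_s$, then $(i,j)\in C(s)$. *)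

(* Defs.v *)
From mathcomp Require Import all_boot.
Set Implicit Arguments. Unset Strict Implicit. Unset Printing Implicit Defensive.

Definition asymmetric (X : Type) (B : rel X) : Prop :=
  forall x y, B x y -> ~~ B y x.

Definition acyclic (X : Type) (B : rel X) : Prop :=
  forall (K : nat) (x : nat -> X), 2 <= K ->
    (forall k, 1 <= k <= K -> B (x k.-1) (x k) && ~~ B (x k) (x k.-1)) ->
    ~~ B (x K) (x 0).

Definition strict_total_order (X : eqType) (P : rel X) : Prop :=
  [/\ irreflexive P, transitive P & forall x y, x != y -> P x y || P y x].

Section School.
Variables (I S : finType).
(* None stands for the outside option \emptyset. *)
Variable P : I -> rel (option S).          (* P i a b  <=>  a P_i b *)
Variable q : S -> nat.
Variable prio : S -> rel I.                (* prio s i j <=> (i,j) \in \succ_s *)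
Variable C : S -> rel I.                   (* C s i j <=> (i,j) \in C(s) *)

Definition R (i : I) (a b : option S) : bool := P i a b || (a == b).

Definition assigned (mu : I -> option S) (s : S) : {set I} :=
  [set i | mu i == Some s].

Definition is_matching (mu : I -> option S) : Prop :=
  forall s, #|assigned mu s| <= q s.

Definition individually_rational (mu : I -> option S) : Prop :=
  forall i, R i (mu i) None.

Definition non_wasteful (mu : I -> option S) : Prop :=
  forall i s, P i (Some s) (mu i) -> #|assigned mu s| = q s.

Definition partially_stable (mu : I -> option S) : Prop :=
  [/\ individually_rational mu, non_wasteful mu &
      forall i j s, mu j = Some s -> P i (Some s) (mu i) -> prio s i j ->
        C s i j].
End School.

(* Main.v *)
Require Import Defs.
From mathcomp Require Import all_boot.
From mathcomp Require Import zify.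
From Stdlib Require Import Classical.

Lemma max_elt (T : finType) (B : rel T) :
  asymmetric B -> acyclic B -> forall W : {set T}, W != set0 ->
  exists2 k, k \in W & forall k', k' \in W -> ~~ B k' k.
Proof.
move=> asy acy W /set0Pn [k0 k0W].
apply: NNPP => Hno.
have Hall : forall k, k \in W -> exists k', (k' \in W) && B k' k.
  move=> k kW; apply: NNPP => H1; apply: Hno; exists k => // k' k'W.
  apply/negP => Bk; apply: H1; exists k'; by rewrite k'W Bk.
pose g k := odflt k [pick k' | (k' \in W) && B k' k].
have Hg : forall k, k \in W -> (g k \in W) && B (g k) k.
  move=> k kW; rewrite /g; case: pickP => [k' Hk'|H0] //=.
  case: (Hall k kW) => k' Hk'; by rewrite H0 in Hk'.
pose f (n : 'I_#|T|.+1) := iter n g k0.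
have Hin : forall n y, y \in W -> iter n g y \in W.
  move=> n y yW; elim: n => [|n IH] //=; by case/andP: (Hg _ IH).
have [[i [j [ij fij]]] | Hninj] := classic (exists i j, i <> j /\ f i = f j); last first.
  have finj : injective f.
    move=> i j H; apply: NNPP => H'; apply: Hninj; by exists i, j.
  have := leq_card f finj; by rewrite card_ord ltnn.
have [a [b [ab Hab]]] : exists a b, a < b /\ iter a g k0 = iter b g k0.
  case: (ltngtP i j) => H.
  - by exists i, j.
  - by exists j, i.
  - by case: ij; apply: val_inj.
pose y := iter a g k0.
have yW : y \in W by apply: Hin.
pose p := b - a.
have Hp : iter p g y = y.
  by rewrite /y -iterD /p subnK ?(ltnW ab) // Hab.
have Hkp : forall n, iter (n * p) g y = y.
  elim=> [|n IH] //; by rewrite mulSn iterD IH Hp.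
have p0 : 0 < p by rewrite /p subn_gt0.
have := acy (3 * p - 1) (fun m => iter (3 * p - m) g y).
have H2 : 2 <= 3 * p - 1 by lia.
move=> /(_ H2) H.
have : ~~ B (iter (3 * p - (3 * p - 1)) g y) (iter (3 * p - 0) g y).
  apply: H => m /andP [m1 mK].
  have -> : 3 * p - m.-1 = (3 * p - m).+1 by lia.
  rewrite iterS.
  have /andP [_ HB] := Hg _ (Hin (3 * p - m) y yW).
  by rewrite HB (asy _ _ HB).
have -> : 3 * p - (3 * p - 1) = 1 by lia.
rewrite subn0 Hkp /=.
by case/andP: (Hg _ yW) => _ ->.
Qed.

Theorem corollary7 (I S : finType) (P : I -> rel (option S)) (q : S -> nat)
  (prio : S -> rel I) (C : S -> rel I) :
  3 <= #|I| ->
  (forall i, strict_total_order (P i)) ->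
  (forall s, 0 < q s) ->
  (forall s, asymmetric (prio s)) ->
  (forall s, acyclic (prio s)) ->
  exists mu : I -> option S,
    is_matching q mu /\ partially_stable P q prio C mu.
Proof.
move=> _ Hto _ Hasy Hacy.
have Pirr : forall i o, ~~ P i o o.
  by move=> i o; case: (Hto i) => H _ _; rewrite H.
have Ptr : forall i a b c, P i a b -> P i b c -> P i a c.
  by move=> i a b c H1 H2; case: (Hto i) => _ H _; apply: H H2.
pose good (mu : {ffun I -> option S}) :=
  [&& [forall s, #|assigned mu s| <= q s],
      [forall i, R P i (mu i) None] &
      [forall i, forall j, forall s,
         (mu j == Some s) ==> P i (Some s) (mu i) ==> ~~ prio s i j]].
pose pot (mu : {ffun I -> option S}) := \sum_i #|[set o | P i (mu i) o]|.
pose mu0 : {ffun I -> option S} := [ffun => None].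
have g0 : good mu0.
  apply/and3P; split.
  - apply/forallP => s; rewrite (_ : assigned _ _ = set0) ?cards0 //.
    by apply/setP => i; rewrite !inE ffunE.
  - by apply/forallP => i; rewrite /R ffunE eqxx orbT.
  - by do 3 apply/forallP => ?; rewrite ffunE.
case: (arg_maxnP pot g0) => mu gmu Hmax.
case/and3P: gmu => /forallP Hm /forallP Hir /forallP Hef.
have Hef' : forall i j s, mu j = Some s -> P i (Some s) (mu i) -> ~~ prio s i j.
  move=> i j s H1 H2; move: (Hef i) => /forallP /(_ j) /forallP /(_ s).
  by rewrite H1 eqxx H2.
exists mu; split; first by move=> s; apply: Hm.
split.
- by move=> i; apply: Hir.
- move=> i s Hi.
  apply/eqP; rewrite eqn_leq Hm /=; rewrite leqNgt; apply/negP => Hlt.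
  pose W := [set k | P k (Some s) (mu k)].
  have WN : W != set0 by apply/set0Pn; exists i; rewrite inE.
  case: (max_elt _ _ (Hasy s) (Hacy s) _ WN) => top; rewrite inE => Htop Hmx.
  pose mu' : {ffun I -> option S} :=
    [ffun k => if k == top then Some s else mu k].
  have gm' : good mu'.
    apply/and3P; split.
    + apply/forallP => s'.
      case: (eqVneq s' s) => [->|ns].
      * apply: leq_trans Hlt.
        apply: (@leq_trans #|top |: assigned mu s|); last by rewrite cardsU1; case: (_ \notin _).
        apply: subset_leq_card; apply/subsetP => k; rewrite !inE ffunE.
        by case: (k == top).
      * apply: leq_trans (Hm s'); apply: subset_leq_card; apply/subsetP => k.
        rewrite !inE ffunE; case: (k == top) => //.
        by move/eqP => [] E; rewrite E eqxx in ns.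
    + apply/forallP => k; rewrite ffunE; case: (eqVneq k top) => [->|_]; last exact: Hir.
      have := Hir top; rewrite /R => /orP [H|/eqP E].
      * by rewrite (Ptr _ _ _ _ Htop H).
      * by rewrite -E Htop.
    + apply/forallP => k; apply/forallP => j; apply/forallP => s'.
      apply/implyP => /eqP; rewrite !ffunE.
      case: (eqVneq j top) => [->|jt].
      * move=> [<-]; apply/implyP; case: (eqVneq k top) => [->|kt] Hk.
        - by rewrite (negbTE (Pirr _ _)) in Hk.
        - by apply: Hmx; rewrite inE.
      * move=> Hj; apply/implyP; case: (eqVneq k top) => [->|kt] Hk.
        - apply: (Hef' top j s' Hj); exact: Ptr Hk Htop.
        - exact: Hef' Hj Hk.
  have := Hmax _ gm'; apply/negP; rewrite -ltnNge.
  rewrite /pot (bigD1 top) //= [X in _ < X](bigD1 top) //=.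
  rewrite (eq_bigr (fun k => #|[set o | P k (mu' k) o]|)); last first.
    by move=> k kt; rewrite ffunE (negbTE kt).
  rewrite ltn_add2r ffunE eqxx; apply: proper_card.
  rewrite properE; apply/andP; split.
  + apply/subsetP => o; rewrite !inE => H; exact: Ptr Htop H.
  + apply/subsetPn; exists (mu top); first by rewrite inE.
    by rewrite inE Pirr.
- move=> i j s Hj Hi Hp; by move: (Hef' i j s Hj Hi); rewrite Hp.
Qed.
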